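(* In the setting below, if $\mathbb{E}\big[|\eta(X^x_m)-\eta(x)|\big]\to 0$ as $m\to\infty$, then $x$ is a Lebesgue point for $\eta$ with respect to $\mathbb{P}_X$. This holds for any choice of nearest neighbors $X^x_m$, i.e. regardless of how ties are broken.
   Context: Let $(\mathcal{X},d)$ be a metric space with its Borel $\sigma$-algebra, let $(\Omega,\mathcal{F},\mathbb{P})$ be a probability space, and let $X,X_1,X_2,\dots$ be i.i.d. $\mathcal{X}$-valued random variables with common law $\mathbb{P}_X$. For $x\in\mathcal{X}$ and $r>0$ write $B_r=\{x':d(x,x')<r\}$, $\bar B_r=\{x':d(x,x')\le r\}$ and $S_r=\{x':d(x,x')=r\}$. The support of $\mathbb{P}_X$ is the set of $x$ such that $\mathbb{P}_X(\bar B_r(x))>0$ for all $r>0$. Fix $x$ in the support of $\mathbb{P}_X$ and a bounded measurable $\eta:\mathcal{X}\to\mathbb{R}$. For each $m\in\mathbb{N}$, a nearest neighbor of $x$ among $X_1,\dots,X_m$ is a measurable $X^x_m:\Omega\to\mathcal{X}$ with $X^x_m(\omega)\in\arg\min_{x'\in\{X_1(\omega),\dots,X_m(\omega)\}}d(x,x')$ for every $\omega\in\Omega$; fix such a sequence $(X^x_m)_{m\in\mathbb{N}}$. The point $x$ is a Lebesgue point (for $\eta$ with respect to $\mathbb{P}_X$) if $\mathbb{E}[\mathbb{I}_{\bar B_r}(X)\,|\eta(X)-\eta(x)|]/\mathbb{P}_X(\bar B_r)\to 0$ as $r\to 0^+$. *)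

(* Defs.v *)
From HB Require Import structures.
From mathcomp Require Import all_boot all_order all_algebra finmap.
From mathcomp Require Import all_classical all_reals all_analysis.
Set Implicit Arguments. Unset Strict Implicit. Unset Printing Implicit Defensive.
Import Order.TTheory GRing.Theory Num.Theory.
Local Open Scope classical_set_scope.
Local Open Scope ring_scope.

(* A metric space (with a chosen inhabitant, needed by MathComp-Analysis to
   put a measurable structure on it). *)
#[short(type="pointedMetricType")]
HB.structure Definition PointedMetric (R : numDomainType) :=
  { M of Pointed M & Metric R M }.

Definition borel {R : realType} (T : pointedMetricType R) :=
  g_sigma_algebraType (@open T).

Definition cball {R : realType} {T : pointedMetricType R} (x : T) (r : R)
  : set (borel T) := [set y | mdist x y <= r].

Definition law {R : realType} {T : pointedMetricType R} d (Omega : measurableType d)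
  (P : probability Omega R) (X : Omega -> T) : set (borel T) -> \bar R :=
  pushforward P (X : Omega -> borel T).

Definition iid {R : realType} {T : pointedMetricType R} d (Omega : measurableType d)
  (P : probability Omega R) (Y : nat -> Omega -> T) : Prop :=
  (forall i, measurable_fun setT (Y i : Omega -> borel T)) /\
  (forall i, law P (Y i) = law P (Y 0%N)) /\
  (forall (I : {fset nat}) (B : nat -> set (borel T)),
      (forall i, i \in I -> measurable (B i)) ->
      P (\bigcap_(i in [set` I]) (Y i @^-1` B i))
      = (\prod_(i <- I) P (Y i @^-1` B i))%E).

Definition in_support {R : realType} {T : pointedMetricType R} d
  (Omega : measurableType d) (P : probability Omega R) (X : Omega -> T) (x : T) :=
  forall r : R, 0 < r -> (0 < law P X (cball x r))%E.

(* NN is a (measurable) nearest-neighbour sequence of x among Xs 1, Xs 2, ...: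
   NN m is a nearest neighbour of x among Xs 1, ..., Xs (m+1)
   (i.e. NN m plays the role of X^x_(m+1) of the paper). *)
Definition nearest_neighbors {R : realType} {T : pointedMetricType R} d
  (Omega : measurableType d) (Xs : nat -> Omega -> T) (x : T)
  (NN : nat -> Omega -> T) : Prop :=
  forall m : nat,
    measurable_fun setT (NN m : Omega -> borel T) /\
    forall w : Omega,
      (exists2 i, (1 <= i <= m.+1)%N & NN m w = Xs i w) /\
      (forall j, (1 <= j <= m.+1)%N -> mdist x (NN m w) <= mdist x (Xs j w)).

Definition lebesgue_point {R : realType} {T : pointedMetricType R} d
  (Omega : measurableType d) (P : probability Omega R) (X : Omega -> T)
  (eta : T -> R) (x : T) : Prop :=
  (fun r : R =>
     fine (\int[P]_w ((\1_(cball x r) (X w) : R) * `|eta (X w) - eta x|)%:E)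
     / fine (law P X (cball x r))) @ 0^'+ --> 0.

(* Main.v *)
Require Import Defs.
From HB Require Import structures.
From mathcomp Require Import all_boot all_order all_algebra finmap.
From mathcomp Require Import all_classical all_reals all_analysis.
From mathcomp Require Import lra ring measurable_realfun.
Import Order.TTheory GRing.Theory Num.Theory.
Local Open Scope classical_set_scope.
Local Open Scope ring_scope.

Lemma open_far (R : realType) (T : pointedMetricType R) (x : T) (r : R) :
  open [set y : T | r < mdist x y].
Proof.
rewrite openE => y /= ry; apply/nbhs_ballP.
exists (mdist x y - r) => /=; first by rewrite subr_gt0.
move=> z; rewrite ballEmdist /= => yz.
have := metric_triangle x y z.
have := metric_triangle x z y.
rewrite (metric_sym z y). lra.
Qed.

Lemma cball_measurable (R : realType) (T : pointedMetricType R) (x : T) (r : R) :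
  measurable (cball x r).
Proof.
have -> : cball x r = ~` [set y : T | r < mdist x y].
  apply/seteqP; split => y; rewrite /cball /= ltNge.
    by move=> ->.
  by move/negP/negbNE.
apply: measurableC; apply: sub_sigma_algebra; exact: open_far.
Qed.

Lemma pre_meas (R : realType) (T : pointedMetricType R) d (Omega : measurableType d)
  (f : Omega -> T) (mf : measurable_fun setT (f : Omega -> borel T))
  (A : set (borel T)) : measurable A -> measurable (f @^-1` A).
Proof. by move=> mA; rewrite -(setTI (f @^-1` A)); apply: mf. Qed.

Lemma prod_if (R : realType) (s : seq nat) (i : nat) (a b : R) :
  uniq s -> i \in s ->
  \prod_(j <- s) (if j == i then a else b) = a * b ^+ (size s).-1.
Proof.
elim: s => //= k s IH /andP[ks us]; rewrite in_cons big_cons.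
case: (eqVneq k i) => [ki|ik].
  subst k; move=> _; congr (_ * _).
  rewrite (eq_big_seq (fun=> b)); last first.
    by move=> j js; case: eqP => // ?; subst; rewrite js in ks.
  by rewrite big_const_seq count_predT; elim: (size s) => //= n ->; rewrite exprS.
rewrite /= => is_; rewrite IH //; case: s is_ {IH ks us} => //= k' s _.
by rewrite exprS mulrCA.
Qed.

Lemma key (R : realType) (T : pointedMetricType R) d (Omega : measurableType d)
  (P : probability Omega R) (Xs : nat -> Omega -> T) (x : T) (NN : nat -> Omega -> T)
  (r : R) (C : set (borel T)) (m : nat) :
  iid P Xs -> nearest_neighbors Xs x NN -> measurable C -> C `<=` cball x r ->
  (((m.+1)%:R * fine (P (Xs 0%N @^-1` C)) *
     (1 - fine (P (Xs 0%N @^-1` cball x r))) ^+ m)%:E <= P (NN m @^-1` C))%E.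
Proof.
move=> [mX [lawX indep]] hNN mC CB.
set B := cball x r; have mB : measurable B := @cball_measurable R T x r.
pose I := seq_fset tt (iota 1 m.+1).
have inI j : (j \in I) = (1 <= j <= m.+1)%N.
  by rewrite seq_fsetE mem_iota add1n ltnS.
pose Bf (i j : nat) : set (borel T) := if j == i then C else ~` B.
have mBf (i j : nat) : measurable (Bf i j).
  by rewrite /Bf; case: (j == i) => //; apply: measurableC.
pose E (i : nat) := \bigcap_(j in [set` I]) (Xs j @^-1` Bf i j).
have mE (i : nat) : measurable (E i).
  apply: fin_bigcap_measurable; first exact: finite_fset.
  by move=> j _; apply: pre_meas.
set pC := fine (P (Xs 0%N @^-1` C)).
set pB := fine (P (Xs 0%N @^-1` B)).
have PE (i : nat) : (1 <= i <= m.+1)%N -> P (E i) = (pC * (1 - pB) ^+ m)%:E.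
  move=> hi; rewrite /E indep //.
  rewrite (eq_big_seq (fun j => (if j == i then pC else 1 - pB)%:E)); last first.
    move=> j jI.
    have -> : P (Xs j @^-1` Bf i j) = law P (Xs j) (Bf i j) by [].
    rewrite lawX /law /pushforward /Bf.
    case: (j == i).
      by rewrite /pC fineK // fin_num_measure //; apply: pre_meas.
    have -> : Xs 0%N @^-1` (~` B) = ~` (Xs 0%N @^-1` B) by [].
    rewrite probability_setC; last by apply: pre_meas.
    by rewrite /pB EFinB fineK // fin_num_measure //; apply: pre_meas.
  rewrite prodEFin; congr (_%:E).
  rewrite (perm_big (iota 1 m.+1)); last first.
    by rewrite (perm_trans (seq_fset_perm _ _)) // undup_id // iota_uniq.
  by rewrite prod_if ?iota_uniq ?mem_iota ?size_iota //= add1n ltnS.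
have sub (i : nat) : (1 <= i <= m.+1)%N -> E i `<=` NN m @^-1` C.
  move=> hi w Ew.
  have [[k hk ek] hmin] := (hNN m).2 w.
  have EwC : C (Xs i w).
    by have := Ew i; rewrite /Bf eqxx; apply; rewrite /= inI.
  have : B (NN m w).
    rewrite /B /cball /=; apply: le_trans (hmin i hi) _; exact: CB.
  rewrite ek => Bk.
  have [ki|ki] := eqVneq k i; first by rewrite /= ek ki.
  have := Ew k; rewrite /Bf (negbTE ki) /=; rewrite inI => /(_ hk).
  by [].
have disj : trivIset [set: 'I_m.+1] (fun k : 'I_m.+1 => E k.+1).
  move=> i j _ _ [w [Ei Ej]]; apply/val_inj/eqP; rewrite -eqSS; apply/negP => /negP ij.
  have ji : (j.+1 == i.+1) = false by rewrite eq_sym; apply/negbTE.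
  have := Ei j.+1; rewrite /Bf ji /= inI ltn_ord andTb => /(_ isT) nB.
  have := Ej j.+1; rewrite /Bf eqxx /= inI ltn_ord andTb => /(_ isT) /CB.
  by move/nB.
set U := \big[setU/set0]_(k < m.+1) E k.+1.
have mU : measurable U by apply: bigsetU_measurable => k _; exact: mE.
have mNC : measurable (NN m @^-1` C) by apply: pre_meas => //; exact: (hNN m).1.
have UC : U `<=` NN m @^-1` C.
  rewrite /U; apply: (big_ind (fun S => S `<=` NN m @^-1` C)) => //.
    by move=> A1 A2 h1 h2 w [/h1|/h2].
  by move=> k _; apply: sub; rewrite ltn_ord andTb.
apply: le_trans (le_measure P (mem_set mU) (mem_set mNC) UC).
rewrite /U measure_bigsetU_ord //.
rewrite (eq_bigr (fun=> (pC * (1 - pB) ^+ m)%:E)); last first.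
  by move=> i _; apply: PE; rewrite ltn_ord.
by rewrite sumEFin sumr_const card_ord -mulrA mulr_natl.
Qed.

Lemma markov_like (R : realType) d (Omega : measurableType d) (P : probability Omega R)
  (f : Omega -> R) (mf : measurable_fun setT f) (A : set Omega) (mA : measurable A)
  (t : R) (t0 : 0 <= t) (hA : forall w, A w -> t <= f w) (f0 : forall w, 0 <= f w) :
  (t%:E * P A <= \int[P]_w (f w)%:E)%E.
Proof.
rewrite -[A]setIT -integral_indic // -ge0_integralZl_EFin //; last first.
  by apply/measurable_EFinP; apply: measurable_indic.
apply: (@ge0_le_integral _ _ _ P setT measurableT (fun w => (t * \1_A w)%:E)) => //.
- by move=> w _; rewrite lee_fin mulr_ge0 // indicE; case: (w \in A).
- apply/measurable_EFinP; apply: measurable_funM; first exact: measurable_cst.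
  exact: measurable_indic.
- exact/measurable_EFinP.
move=> w _; rewrite lee_fin indicE.
case: (boolP (w \in A)) => [/set_mem/hA|_]; first by rewrite mulr1.
by rewrite mulr0.
Qed.

Lemma bernoulli_ineq (R : realType) (p : R) (n : nat) :
  0 <= p <= 1 -> 1 - n%:R * p <= (1 - p) ^+ n.
Proof.
move=> /andP[p0 p1]; elim: n => [|n IH]; first by rewrite mul0r subr0 expr0.
rewrite exprS -nat1r.
have h0 : 0 <= (1 - p) ^+ n by apply: exprn_ge0; lra.
have [h|h] := leP 0 (1 - n%:R * p).
  have : (1 - n%:R * p) * (1 - p) <= (1 - p) ^+ n * (1 - p).
    by apply: ler_wpM2r => //; lra.
  have : 0 <= n%:R * p * p by apply: mulr_ge0 => //; apply: mulr_ge0.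
  nra.
have : 0 <= (1 - p) * (1 - p) ^+ n by apply: mulr_ge0 => //; lra.
nra.
Qed.

Lemma arith (R : realType) (p q B : R) (N : nat) :
  0 < p -> p <= 1/4 -> N%:R <= 1 / (2 * p) -> 1 / (2 * p) < N.+1%:R -> 0 <= q ->
  N%:R * q * (1 - p) ^+ N.-1 <= B -> q <= 8 * B * p.
Proof.
move=> p0 p4 hN1 hN2 q0 hB.
have hNp : N%:R * p <= 1/2.
  by move: hN1; rewrite ler_pdivlMr ?mulr_gt0 //; nra.
have hNp2 : 1/4 <= N%:R * p.
  move: hN2; rewrite ltr_pdivrMr ?mulr_gt0 // -nat1r; nra.
have hN0 : (0 < N)%N.
  case: N hNp2 {hN1 hN2 hB hNp} => //; rewrite mul0r; lra.
have hb := @bernoulli_ineq R p N.-1.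
have : 1 / 2 <= (1 - p) ^+ N.-1.
  apply: le_trans (hb _); last lra.
  move: hNp; rewrite -(prednK hN0) -nat1r; nra.
move=> h2.
have h3 : 0 <= N%:R * q by apply: mulr_ge0.
have : N%:R * q * (1/2) <= B.
  apply: le_trans hB; apply: ler_wpM2l => //.
nra.
Qed.

Lemma ereal_cvg0_ev (R : realType) (u : nat -> \bar R) :
  u @ \oo --> 0%E -> forall e : R, 0 < e ->
  exists m0, forall m, (m0 <= m)%N -> (u m <= e%:E)%E.
Proof.
move=> /fine_cvgP[finev cvgf] e e0.
have := (cvgrPdist_le _ _).1 cvgf e e0.
move=> [m2 _ H2]; move: finev => [m1 _ H1].
exists (maxn m1 m2) => m hm.
have hm1 : (m1 <= m)%N by apply: leq_trans hm; apply: leq_maxl.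
have hm2 : (m2 <= m)%N by apply: leq_trans hm; apply: leq_maxr.
have := H2 m hm2; have := H1 m hm1 => /= fm.
rewrite sub0r normrN => h.
by rewrite -(fineK fm) lee_fin; apply: le_trans h; apply: ler_norm.
Qed.

Lemma small_eq0 (R : realType) (a : R) :
  0 <= a -> (forall n : nat, a <= n.+1%:R^-1) -> a = 0.
Proof.
move=> a0 h; apply/eqP; rewrite eq_le a0 andbT leNgt; apply/negP => apos.
have ia : 0 <= a^-1 by rewrite invr_ge0.
have := truncn_itv ia; set n := Num.Def.trunc _ => /andP[_ hn].
have := h n; rewrite -(invrK a) lef_pV2 ?posrE ?invr_gt0 //; lra.
Qed.

Lemma q_small (R : realType) (T : pointedMetricType R) d (Omega : measurableType d)
  (P : probability Omega R) (X : Omega -> T) (x : T)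
  (mX : measurable_fun setT (X : Omega -> borel T))
  (S : set (borel T)) (mS : measurable S) (hS : ~ S x) (e : R) (e0 : 0 < e) :
  \forall r \near 0^'+, fine (P (X @^-1` (cball x r `&` S))) <= e.
Proof.
pose F n := X @^-1` (cball x (n.+1%:R^-1) `&` S).
have mF n : measurable (F n).
  by apply: pre_meas => //; apply: measurableI => //; apply: cball_measurable.
have hF0 : \bigcap_n F n = set0.
  apply/seteqP; split => // w /= hw.
  have hx : X w = x.
    apply/esym/mdist_positivity/small_eq0; first exact: mdist_ge0.
    by move=> n; have [] := hw n I.
  by have [_] := hw 0%N I; rewrite hx.
have : (P \o F) n @[n --> \oo] --> P (\bigcap_n F n).
  apply: nonincreasing_cvg_mu => //.
- by apply: (le_lt_trans (probability_le1 _ (mF 0%N))); rewrite ltry.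
- by rewrite hF0.
- move=> n m nm; apply/subsetPset => w [/= hw Sw]; split => //; apply: le_trans hw _.
  by rewrite lef_pV2 ?posrE // ler_nat.
rewrite hF0 measure0 => /ereal_cvg0_ev /(_ e e0) [n0 hn0].
near=> r.
have hr : cball x r `&` S `<=` cball x (n0.+1%:R^-1) `&` S.
  move=> y [hy Sy]; split => //; apply: le_trans hy _.
  near: r; apply: nbhs_right_le; by [].
have mr : measurable (X @^-1` (cball x r `&` S)).
  by apply: pre_meas => //; apply: measurableI => //; apply: cball_measurable.
rewrite -lee_fin fineK ?fin_num_measure //.
apply: le_trans (hn0 n0 (leqnn _)).
apply: le_measure; [exact: mem_set mr|exact: mem_set (mF n0)|by move=> w /hr].
Unshelve. all: by end_near.
Qed.

Lemma meas_dev (R : realType) (T : pointedMetricType R) d (Omega : measurableType d)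
  (f : Omega -> T) (mf : measurable_fun setT (f : Omega -> borel T))
  (eta : T -> R) (meta : measurable_fun setT (eta : borel T -> R)) (x : T) :
  measurable_fun setT (fun w => `|eta (f w) - eta x|).
Proof.
apply: measurableT_comp; first exact: normr_measurable.
apply: measurable_funB; last exact: measurable_cst.
exact: (measurableT_comp (f := (eta : borel T -> R)) (g := (f : Omega -> borel T))).
Qed.

Lemma dev_meas (R : realType) (T : pointedMetricType R)
  (eta : T -> R) (meta : measurable_fun setT (eta : borel T -> R)) (x : T) (t : R) :
  measurable ([set y | t < `|eta y - eta x|] : set (borel T)).
Proof.
have h := @meas_dev R T _ (borel T) id (@measurable_id _ _ setT) eta meta x.
have -> : ([set y | t < `|eta y - eta x|] : set (borel T)) =
  (fun y : borel T => `|eta y - eta x|) @^-1` `]t, +oo[.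
  by apply/seteqP; split => y /=; rewrite in_itv /= andbT.
by rewrite -(setTI (_ @^-1` _)); apply: h => //.
Qed.

Lemma int_indicZ (R : realType) d (Omega : measurableType d) (P : probability Omega R)
  (A : set Omega) (mA : measurable A) (c : R) (c0 : 0 <= c) :
  (\int[P]_w (c * \1_A w)%:E = (c * fine (P A))%:E)%E.
Proof.
rewrite (eq_integral (fun w => c%:E * (\1_A w)%:E)%E) //.
rewrite ge0_integralZl_EFin //; last first.
  by apply/measurable_EFinP; apply: measurable_indic.
rewrite integral_indic // setIT EFinM fineK //; exact: fin_num_measure.
Qed.

Lemma g_bound (R : realType) (T : pointedMetricType R) d (Omega : measurableType d)
  (P : probability Omega R) (X : Omega -> T)
  (mX : measurable_fun setT (X : Omega -> borel T))
  (eta : T -> R) (meta : measurable_fun setT (eta : borel T -> R)) (x : T)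
  (r t K : R) (t0 : 0 <= t) (K0 : 0 <= K) (hK : forall y, `|eta y - eta x| <= K) :
  fine (\int[P]_w ((\1_(cball x r) (X w) : R) * `|eta (X w) - eta x|)%:E) <=
  t * fine (P (X @^-1` cball x r)) +
  K * fine (P (X @^-1` (cball x r `&` [set y | t < `|eta y - eta x|]))).
Proof.
set B := cball x r; set S := [set y : borel T | t < `|eta y - eta x|].
have mB : measurable B by apply: cball_measurable.
have mS : measurable S by apply: dev_meas.
have mA1 : measurable (X @^-1` B) by apply: pre_meas.
have mA2 : measurable (X @^-1` (B `&` S)) by apply: pre_meas => //; apply: measurableI.
have mdev := @meas_dev R T d Omega X mX eta meta x.
set f := fun w => ((\1_B (X w) : R) * `|eta (X w) - eta x|).
have f0 w : 0 <= f w by rewrite /f mulr_ge0 // indicE; case: (X w \in B).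
have mf : measurable_fun setT f.
  apply: measurable_funM => //.
  exact: (measurable_indic (D := setT) mA1).
have h1 : (\int[P]_w (f w)%:E <=
    \int[P]_w ((t * \1_(X @^-1` B) w)%:E + (K * \1_(X @^-1` (B `&` S)) w)%:E))%E.
  apply: ge0_le_integral => //.
  - by move=> w _; rewrite lee_fin.
  - exact/measurable_EFinP.
  - apply: emeasurable_funD; apply/measurable_EFinP; apply: measurable_funM;
      (try exact: measurable_cst); exact: measurable_indic.
  move=> w _; rewrite /f -EFinD lee_fin !indicE.
  case: (boolP (X w \in B)) => hB; last first.
    by rewrite mul0r addr_ge0 // mulr_ge0 //; case: (_ \in _).
  have hB' : w \in X @^-1` B by rewrite inE; exact: set_mem hB.
  rewrite hB' mul1r mulr1.
  have [ht|ht] := leP `|eta (X w) - eta x| t.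
    by rewrite ler_wpDr // mulr_ge0 //; case: (_ \in _).
  have hBS : w \in X @^-1` (B `&` S) by rewrite inE; split => //; exact: set_mem hB.
  by rewrite hBS mulr1 -[X in X <= _]add0r lerD.
rewrite ge0_integralD // in h1; last 4 first.
- by move=> w _; rewrite lee_fin mulr_ge0 // indicE; case: (_ \in _).
- by apply/measurable_EFinP; apply: measurable_funM; [exact: measurable_cst|exact: measurable_indic].
- by move=> w _; rewrite lee_fin mulr_ge0 // indicE; case: (_ \in _).
- by apply/measurable_EFinP; apply: measurable_funM; [exact: measurable_cst|exact: measurable_indic].
rewrite !int_indicZ // -EFinD in h1.
have h0 : (0 <= \int[P]_w (f w)%:E)%E by apply: integral_ge0 => w _; rewrite lee_fin.
rewrite -lee_fin fineK //; rewrite ge0_fin_numE //; apply: le_lt_trans h1 _; exact: ltry.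
Qed.

Theorem mainTheorem1 (R : realType) (T : pointedMetricType R)
  (d : measure_display) (Omega : measurableType d) (P : probability Omega R)
  (Xs : nat -> Omega -> T) (x : T) (eta : T -> R) (NN : nat -> Omega -> T) :
  iid P Xs ->
  in_support P (Xs 0%N) x ->
  measurable_fun setT (eta : borel T -> R) ->
  (exists M : R, forall y : T, `|eta y| <= M) ->
  nearest_neighbors Xs x NN ->
  (fun m : nat => (\int[P]_w (`|eta (NN m w) - eta x|)%:E)%E) @ \oo --> 0%E ->
  lebesgue_point P (Xs 0%N) eta x.
Proof.
move=> hiid hsup meta [M hM] hNN hE.
have mX0 := hiid.1 0%N.
set X := Xs 0%N.
have M0 : 0 <= M by apply: le_trans (hM x).
set K := 2 * M.
have K0 : 0 <= K by rewrite /K mulr_ge0.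
have hK y : `|eta y - eta x| <= K.
  by apply: le_trans (ler_normB _ _) _; rewrite /K mulr2n mulrDl mul1r lerD.
rewrite /lebesgue_point; apply/cvgrPdist_le => e e0.
set t := e / 2.
have t0 : 0 < t by rewrite /t divr_gt0.
set del := e / (2 * (K + 1)).
have del0 : 0 < del by rewrite /del divr_gt0 // mulr_gt0 //; lra.
have [m0 hm0] := @ereal_cvg0_ev R _ hE _ (mulr_gt0 t0 (divr_gt0 del0 (ltr0Sn _ 7))).
set L : R := (m0.+2)%:R.
have L2 : 2 <= L by rewrite /L (ler_nat R 2).
set S := [set y : borel T | t < `|eta y - eta x|].
have mS : measurable S by apply: dev_meas.
have hSx : ~ S x by rewrite /S /= subrr normr0; lra.
have hq := @q_small R T d Omega P X x mX0 S mS hSx (del / (2 * L)) (divr_gt0 del0 (mulr_gt0 (ltr0Sn _ 1) (lt_le_trans (ltr0Sn _ 1) L2))).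
near=> r.
have r0 : 0 < r by near: r; exact: nbhs_right_gt.
have hqr : fine (P (X @^-1` (cball x r `&` S))) <= del / (2 * L) by near: r; exact: hq.
set p := fine (P (X @^-1` cball x r)).
rewrite /law /pushforward -/p.
set q := fine (P (X @^-1` (cball x r `&` S))).
set g := fine _.
have mB : measurable (X @^-1` cball x r) by apply: pre_meas => //; apply: cball_measurable.
have p0 : 0 < p.
  rewrite /p; apply: fine_gt0; apply/andP; split; first exact: hsup r r0.
  exact: (le_lt_trans (probability_le1 _ mB) (ltry 1)).
have q0 : 0 <= q by apply: fine_ge0; apply: measure_ge0.
have g0 : 0 <= g.
  apply: fine_ge0; apply: integral_ge0 => w _; rewrite lee_fin mulr_ge0 // indicE.
have hg : g <= t * p + K * q.
  exact: (@g_bound R T d Omega P X mX0 eta meta x r t K (ltW t0) K0 hK).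
have key2 : q <= del * p.
  have L0 : 0 < L by lra.
  have [hp|hp] := leP p (1 / (2 * L)); last first.
    apply: le_trans hqr _; rewrite ler_pM2l //; apply: ltW.
    by move: hp; rewrite mul1r.
  have pinv0 : 0 <= 1 / (2 * p) by rewrite divr_ge0 // mulr_ge0 //; lra.
  have := truncn_itv pinv0; set N := Num.Def.trunc _ => /andP[hN1 hN2].
  have hLp : L <= 1 / (2 * p).
    move: hp; rewrite ler_pdivlMr ?mulr_gt0 // ler_pdivlMr ?mulr_gt0 //; lra.
  have hNm : (m0.+2 <= N)%N.
    rewrite -ltnS -(ltr_nat R); apply: le_lt_trans hN2; exact: hLp.
  have hN0 : (0 < N)%N by apply: leq_trans hNm.
  set C := cball x r `&` S.
  have mC : measurable C by apply: measurableI => //; apply: cball_measurable.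
  have hk := @key R T d Omega P Xs x NN r C N.-1 hiid hNN mC (@subIsetl _ _ _).
  rewrite prednK // in hk.
  have mNN := (hNN N.-1).1.
  have mA : measurable (NN N.-1 @^-1` C) by apply: pre_meas.
  have hmk := @markov_like R d Omega P (fun w => `|eta (NN N.-1 w) - eta x|)
    (@meas_dev R T d Omega (NN N.-1) mNN eta meta x) _ mA t (ltW t0).
  have := hmk (fun w hw => ltW hw.2) (fun w => normr_ge0 _).
  move=> {}hmk.
  have hNm' : (m0 <= N.-1)%N by rewrite -ltnS prednK //; apply: leq_trans hNm.
  have hm := hm0 N.-1 hNm'.
  have hfin : P (NN N.-1 @^-1` C) \is a fin_num by apply: fin_num_measure.
  have t0e : (0 <= t%:E)%E by rewrite lee_fin ltW.
  have h3 := lee_wpmul2l t0e hk.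
  have := le_trans h3 (le_trans hmk hm).
  rewrite -EFinM lee_fin ler_pM2l // => hb.
  have := @arith R p q (del / 8) N p0 _ hN1 hN2 q0 hb.
  have -> : 8 * (del / 8) = del by rewrite mulrC divfK //.
  apply; apply: le_trans hp _; rewrite ler_pdivrMr ?mulr_gt0 //; lra.
rewrite sub0r normrN ger0_norm ?divr_ge0 ?(ltW p0) //.
rewrite ler_pdivrMr //.
have hd : del * (2 * (K + 1)) = e.
  by rewrite /del divfK // mulf_neq0 //; lra.
have : K * q <= K * (del * p) by apply: ler_wpM2l.
rewrite /t in hg.
nra.
Unshelve. all: by end_near.
Qed.
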